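(* The complete bipartite graph $K_{3,3}$ is B-factorizable.
   Context: Let $V$ be a finite set with $|V|$ even. $K=\binom{V}{2}$ is the set of 2-element subsets of $V$. An equal partition of $V$ is an unordered pair $\{H,A\}$ of disjoint subsets with $H\cup A=V$ and $|H|=|A|=|V|/2$; $C=C(V)$ is the set of equal partitions. For $c=\{H,A\}\in C$, $B_c$ is the complete bipartite graph with parts $H$ and $A$. Vectors live in $\mathbb N^{K\cup C}$ with $\mathbb N=\{0,1,2,\dots\}$; $v|_K$ denotes the restriction to coordinates in $K$. For $E\subseteq K$, $\chi_E\in\{0,1\}^K$ is its indicator vector. For $E\subseteq K$ and $c\in C$, $\chi_{E,c}\in\mathbb N^{K\cup C}$ has $K$-components $\chi_E$ and $C$-components equal to the indicator of $c$. $PM(V)=\{\chi_{q,c}: c\in C,\ q\text{ a perfect matching of }B_c\}$. For $\mathcal M\subseteq\mathbb N^{K\cup C}$, $\mathbf N(\mathcal M)$ is the set of finite nonnegative integer combinations of elements of $\mathcal M$, and $\overline{\mathbf N}(\mathcal M)=\{v\in\mathbb N^{K\cup C}: kv\in\mathbf N(\mathcal M)\text{ for some integer }k\ge1\}$. A regular graph $G=(V,E)$ is B-factorizable if every $v\in\overline{\mathbf N}(PM(V))$ with $v|_K=\chi_E$ belongs to $\mathbf N(PM(V))$. *)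

(* Defs.v *)
From mathcomp Require Import all_boot.
Set Implicit Arguments. Unset Strict Implicit. Unset Printing Implicit Defensive.

Section BFact.
Variable V : finType.

Definition Kpred (e : {set V}) : bool := #|e| == 2.
Definition Kt := {e : {set V} | Kpred e}.

(* C = equal partitions {H, A} of V, represented as the 2-set {H, ~: H} *)
Definition eqpart (P : {set {set V}}) : bool :=
  [exists H : {set V}, (#|H| * 2 == #|V|) && (P == [set H; ~: H])].
Definition Ct := {P : {set {set V}} | eqpart P}.

Definition vec := {ffun (Kt + Ct) -> nat}.

Definition in_Bc (c : Ct) (e : Kt) : bool :=
  [forall X in val c, #|val e :&: X| == 1].

Definition is_pm (c : Ct) (q : {set Kt}) : bool :=
  [forall e in q, in_Bc c e] &&
  [forall x : V, #|[set e in q | x \in val e]| == 1].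

Definition chiEc (E : {set Kt}) (c : Ct) : vec :=
  [ffun z => match z with inl e => nat_of_bool (e \in E)
                        | inr c' => nat_of_bool (c' == c) end].

Definition inN_PM (v : vec) : Prop :=
  exists s : seq ({set Kt} * Ct),
    all (fun p => is_pm p.2 p.1) s /\
    forall z, v z = \sum_(p <- s) chiEc p.1 p.2 z.

Definition inNbar_PM (v : vec) : Prop :=
  exists k : nat, 0 < k /\ inN_PM [ffun z => k * v z].

Definition B_factorizable (E : {set Kt}) : Prop :=
  forall v : vec, inNbar_PM v ->
    (forall e : Kt, v (inl e) = nat_of_bool (e \in E)) -> inN_PM v.

Definition regular (E : {set Kt}) : Prop :=
  exists d, forall x : V, #|[set e in E | x \in val e]| = d.

Definition complete_bip (H : {set V}) : {set Kt} :=
  [set e : Kt | #|val e :&: H| == 1].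

End BFact.

(* Main.v *)
Require Import Defs.
From mathcomp Require Import all_boot.
Set Implicit Arguments. Unset Strict Implicit. Unset Printing Implicit Defensive.

Definition fsig (r i : nat) := if r < 3 then (i + r) %% 3 else (r - i) %% 3.
Definition sig (r : 'I_6) (i : 'I_3) : 'I_3 := Ordinal (ltn_pmod (fsig r i) (isT : 0 < 3)).
Definition o3 : seq 'I_3 := [:: @Ordinal 3 0 isT; @Ordinal 3 1 isT; @Ordinal 3 2 isT].
Definition o6 : seq 'I_6 := [:: @Ordinal 6 0 isT; @Ordinal 6 1 isT; @Ordinal 6 2 isT;
   @Ordinal 6 3 isT; @Ordinal 6 4 isT; @Ordinal 6 5 isT].
Lemma mem_o3 (i : 'I_3) : i \in o3.
Proof. by case: i => [[|[|[|m]]] Hm]. Qed.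
Lemma mem_o6 (i : 'I_6) : i \in o6.
Proof. by case: i => [[|[|[|[|[|[|m]]]]]] Hm]. Qed.
Definition compat (t : option ('I_3 * 'I_3)) (r : 'I_6) : bool :=
  if t is Some d then sig r d.1 == d.2 else true.
Definition hitb (t : option ('I_3 * 'I_3)) r := if t is Some d then sig r d.1 == d.2 else false.
Definition isN (t : option ('I_3 * 'I_3)) : nat := if t is None then 1 else 0.
Definition part3 r1 r2 r3 := all (fun i => all (fun j => (sig r1 i == j) + (sig r2 i == j) + (sig r3 i == j) == 1) o3) o3.
Definition o (n : nat) : 'I_6 := nth (@Ordinal 6 0 isT) o6 n.
Definition cands : seq ('I_6 * 'I_6 * 'I_6) :=
  [:: (o 0, o 1, o 2); (o 0, o 2, o 1); (o 1, o 0, o 2); (o 1, o 2, o 0); (o 2, o 0, o 1); (o 2, o 1, o 0); (o 3, o 4, o 5); (o 3, o 5, o 4); (o 4, o 3, o 5); (o 4, o 5, o 3); (o 5, o 3, o 4); (o 5, o 4, o 3)].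
Definition good t1 t2 t3 :=
  has (fun x => [&& compat t1 x.1.1, compat t2 x.1.2, compat t3 x.2 &
     part3 x.1.1 x.1.2 x.2]) cands.
Definition unhit t1 t2 t3 r := [&& ~~ hitb t1 r, ~~ hitb t2 r & ~~ hitb t3 r].
Definition evens := [:: o 0; o 1; o 2].
Definition odds := [:: o 3; o 4; o 5].
Definition epairs := [:: (o 0, o 1); (o 0, o 2); (o 1, o 2)].
Definition opairs := [:: (o 3, o 4); (o 3, o 5); (o 4, o 5)].
Definition cert t1 t2 t3 := good t1 t2 t3 ||
  (if isN t1 + isN t2 + isN t3 == 0 then
     has (fun r => has (fun r' => unhit t1 t2 t3 r && unhit t1 t2 t3 r') odds) evens
   else if isN t1 + isN t2 + isN t3 == 1 then
     has (fun p => has (fun p' =>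
       [&& unhit t1 t2 t3 p.1, unhit t1 t2 t3 p.2, unhit t1 t2 t3 p'.1 & unhit t1 t2 t3 p'.2]) opairs) epairs
   else false).
Definition allt : seq (option ('I_3 * 'I_3)) := None :: [seq Some (i,j) | i <- o3, j <- o3].
Lemma mem_allt t : t \in allt.
Proof.
case: t => [[[[|[|[|m]]] Hm] [[|[|[|m']]] Hm']]|] //.
Qed.
Lemma cert_all : all (fun t1 => all (fun t2 => all (fun t3 => cert t1 t2 t3) allt) allt) allt.
Proof. vm_compute. reflexivity. Qed.
Lemma certP t1 t2 t3 : cert t1 t2 t3.
Proof.
by have /allP/(_ t1 (mem_allt _))/allP/(_ t2 (mem_allt _))/allP/(_ t3 (mem_allt _)) := cert_all.
Qed.

Definition inj_all := all (fun a => all (fun b => all (fun c => [&& a != b, a != c & b != c] ==>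
   has (fun r => [&& sig r (@Ordinal 3 0 isT) == a, sig r (@Ordinal 3 1 isT) == b & sig r (@Ordinal 3 2 isT) == c]) o6) o3) o3) o3.
Lemma inj_allT : inj_all. Proof. vm_compute. reflexivity. Qed.
Lemma sig_of_inj (f : 'I_3 -> 'I_3) : injective f -> exists r, forall i, sig r i = f i.
Proof.
move=> fi.
have := inj_allT => /allP/(_ _ (mem_o3 (f (@Ordinal 3 0 isT))))/allP/(_ _ (mem_o3 (f (@Ordinal 3 1 isT))))
   /allP/(_ _ (mem_o3 (f (@Ordinal 3 2 isT)))).
rewrite !(inj_eq fi) => /implyP /(_ isT) /hasP [r _ /and3P [/eqP h0 /eqP h1 /eqP h2]].
exists r => -[[|[|[|m]]] Hm] //.
- by rewrite (_ : Ordinal Hm = @Ordinal 3 0 isT) ?h0 //; apply: val_inj.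
- by rewrite (_ : Ordinal Hm = @Ordinal 3 1 isT) ?h1 //; apply: val_inj.
- by rewrite (_ : Ordinal Hm = @Ordinal 3 2 isT) ?h2 //; apply: val_inj.
Qed.

Definition sig_uniq_all := all (fun r => all (fun j => has (fun i => all (fun i' => (sig r i' == j) == (i' == i)) o3) o3) o3) o6.
Lemma sig_uniq_allT : sig_uniq_all. Proof. vm_compute. reflexivity. Qed.
Lemma sig_uniq r j : exists i, forall i', (sig r i' == j) = (i' == i).
Proof.
have := sig_uniq_allT => /allP/(_ r (mem_o6 r))/allP/(_ j (mem_o3 j))/hasP [i _ /allP Hi].
exists i => i'; have := Hi i' (mem_o3 i'). by move/eqP.
Qed.

Definition pairA_all := all (fun r => all (fun r' => has (fun i => has (fun j =>
   all (fun x => (sig x i == j) ==> (x == r) || (x == r')) o6) o3) o3) odds) evens.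
Lemma pairA_allT : pairA_all. Proof. vm_compute. reflexivity. Qed.
Lemma pairA r r' : r \in evens -> r' \in odds ->
  exists i j, forall x, sig x i == j -> (x == r) || (x == r').
Proof.
move=> hr hr'; have := pairA_allT => /allP/(_ r hr)/allP/(_ r' hr')/hasP [i _ /hasP [j _ /allP H]].
by exists i, j => x hx; have /implyP := H x (mem_o6 x); apply.
Qed.

Definition pairB_all := all (fun p => all (fun p' => has (fun i => has (fun j => has (fun i' => has (fun j' =>
   all (fun x => [&& (sig x i == j) ==> (x == p.1) || (x == p'.1),
                     (sig x i' == j') ==> (x == p.2) || (x == p'.2) &
                     ~~ ((sig x i == j) && (sig x i' == j'))]) o6) o3) o3) o3) o3) opairs) epairs.
Lemma pairB_allT : pairB_all. Proof. vm_compute. reflexivity. Qed.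
Lemma pairB p p' : p \in epairs -> p' \in opairs ->
  exists i j i' j', forall x, [&& (sig x i == j) ==> (x == p.1) || (x == p'.1),
                     (sig x i' == j') ==> (x == p.2) || (x == p'.2) &
                     ~~ ((sig x i == j) && (sig x i' == j'))].
Proof.
move=> hp hp'; have := pairB_allT => /allP/(_ p hp)/allP/(_ p' hp')/hasP [i _ /hasP [j _ /hasP [i' _ /hasP [j' _ /allP H]]]].
by exists i, j, i', j' => x; exact: H x (mem_o6 x).
Qed.

Definition crb (a b : 'I_3 -> bool) (r : 'I_6) := all (fun i => a i != b (sig r i)) o3.
Definition l3 (x y z : bool) (i : 'I_3) := nth false [:: x; y; z] i.
Definition classify_all := all (fun a0 : bool => all (fun a1 : bool => all (fun a2 : bool => all (fun b0 : bool => all (fun b1 : bool => all (fun b2 : bool =>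
  (a0 + a1 + a2 + b0 + b1 + b2 == 3) ==>
  (all (crb (l3 a0 a1 a2) (l3 b0 b1 b2)) o6 ||
   has (fun i => has (fun j => all (fun r => crb (l3 a0 a1 a2) (l3 b0 b1 b2) r == (sig r i == j)) o6) o3) o3))
  [:: true; false]) [:: true; false]) [:: true; false]) [:: true; false]) [:: true; false]) [:: true; false].
Lemma classify_allT : classify_all. Proof. vm_compute. reflexivity. Qed.
Definition i0 : 'I_3 := @Ordinal 3 0 isT.
Definition i1 : 'I_3 := @Ordinal 3 1 isT.
Definition i2 : 'I_3 := @Ordinal 3 2 isT.
Lemma l3E (a : 'I_3 -> bool) i : l3 (a i0) (a i1) (a i2) i = a i.
Proof. by case: i => [[|[|[|m]]] Hm] //; rewrite /l3 /=; congr a; apply: val_inj. Qed.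
Lemma tf (b : bool) : b \in [:: true; false]. Proof. by case: b. Qed.
Lemma classify (a b : 'I_3 -> bool) : a i0 + a i1 + a i2 + b i0 + b i1 + b i2 = 3 ->
  (forall r, crb a b r) \/ exists i j, forall r, crb a b r = (sig r i == j).
Proof.
move=> h.
have := classify_allT => /allP/(_ _ (tf (a i0)))/allP/(_ _ (tf (a i1)))/allP/(_ _ (tf (a i2)))
  /allP/(_ _ (tf (b i0)))/allP/(_ _ (tf (b i1)))/allP/(_ _ (tf (b i2))).
rewrite h eqxx implyTb.
have E : forall r, crb (l3 (a i0) (a i1) (a i2)) (l3 (b i0) (b i1) (b i2)) r = crb a b r.
  by move=> r; rewrite /crb; apply: eq_all => i; rewrite !l3E.
case/orP => [/allP H|/hasP [i _ /hasP [j _ /allP H]]].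
  by left => r; rewrite -E; apply: H; exact: mem_o6.
by right; exists i, j => r; rewrite -E; apply/eqP; apply: H; exact: mem_o6.
Qed.


Lemma exists_L (T : finType) (f : T -> nat) : exists L : seq T, forall c, count_mem c L = f c.
Proof.
exists (flatten [seq nseq (f x) x | x <- enum T]) => c.
rewrite count_flatten -map_comp sumnE big_map big_enum /=.
rewrite (bigD1 c) //= count_nseq /= eqxx mul1n big1 ?addn0 // => x hx.
by rewrite count_nseq /= (negbTE hx).
Qed.

Lemma sum_count (T : finType) (L : seq T) (F : T -> nat) :
  \sum_(c : T) count_mem c L * F c = \sum_(x <- L) F x.
Proof.
elim: L => [|x L IH]; first by rewrite big_nil big1.
rewrite big_cons -IH /=.
rewrite (eq_bigr (fun c => (x == c) * F c + count_mem c L * F c)); last by move=> c _; rewrite mulnDl.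
rewrite big_split /=; congr (_ + _).
rewrite (bigD1 x) //= eqxx mul1n big1 ?addn0 // => c hc.
by rewrite eq_sym (negbTE hc).
Qed.

Section Graph.
Variable V : finType.
Variable H : {set V}.
Hypothesis cV : #|V| = 6.
Hypothesis cH : #|H| = 3.

Lemma cT : #|~: H| = 3.
Proof. by rewrite cardsCs setCK cV cH. Qed.

Definition hv (i : 'I_3) : V := enum_val (cast_ord (esym cH) i).
Definition tv (j : 'I_3) : V := enum_val (cast_ord (esym cT) j).

Lemma hvH i : hv i \in H. Proof. exact: enum_valP. Qed.
Lemma tvT j : tv j \notin H.
Proof. by have := enum_valP (cast_ord (esym cT) j); rewrite in_setC. Qed.
Lemma hv_inj : injective hv.
Proof. by move=> i i' /enum_val_inj /cast_ord_inj. Qed.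
Lemma tv_inj : injective tv.
Proof. by move=> i i' /enum_val_inj /cast_ord_inj. Qed.
Lemma hv_surj x : x \in H -> exists i, x = hv i.
Proof.
move=> Hx; exists (cast_ord cH (enum_rank_in Hx x)).
by rewrite /hv cast_ordK enum_rankK_in.
Qed.
Lemma tv_surj x : x \notin H -> exists j, x = tv j.
Proof.
rewrite -in_setC => Hx; exists (cast_ord cT (enum_rank_in Hx x)).
by rewrite /tv cast_ordK enum_rankK_in.
Qed.
Lemma hv_tv i j : hv i != tv j.
Proof. by apply: contraNneq (tvT j) => <-; exact: hvH. Qed.

Lemma edge_proof i j : Kpred [set hv i; tv j].
Proof. by rewrite /Kpred cards2 hv_tv. Qed.
Definition edge i j : Kt V := exist _ [set hv i; tv j] (edge_proof i j).

Lemma hv_in_edge i0 i j : (hv i0 \in val (edge i j)) = (i0 == i).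
Proof.
by rewrite /= in_set2 (inj_eq hv_inj) (negbTE (hv_tv _ _)) orbF.
Qed.
Lemma tv_in_edge j0 i j : (tv j0 \in val (edge i j)) = (j0 == j).
Proof.
by rewrite /= in_set2 (inj_eq tv_inj) (eq_sym (tv j0)) (negbTE (hv_tv _ _)).
Qed.
Lemma edge_inj i j i' j' : edge i j = edge i' j' -> i = i' /\ j = j'.
Proof.
move=> e; split.
  by apply/eqP; rewrite -(hv_in_edge i i' j') -e hv_in_edge.
by apply/eqP; rewrite -(tv_in_edge j i' j') -e tv_in_edge.
Qed.

Definition E := locked (complete_bip H).
Lemma EE : E = complete_bip H. Proof. by rewrite /E -lock. Qed.

Lemma card1I (c : V) (X : {set V}) : #|[set c] :&: X| = (c \in X).
Proof.
case hc: (c \in X).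
  by rewrite (setIidPl _) ?cards1 // sub1set.
apply/eqP; rewrite cards_eq0; apply/eqP/setP => x; rewrite !inE.
by case: (x =P c) => // ->; rewrite hc.
Qed.
Lemma card2I (a b : V) (X : {set V}) : a != b -> #|[set a; b] :&: X| = (a \in X) + (b \in X).
Proof.
move=> ab; rewrite setIUl cardsU !card1I.
have -> : [set a] :&: X :&: ([set b] :&: X) = set0.
  apply/setP => x; rewrite !inE; case: (x =P a) => // ->.
  by rewrite (negbTE ab) andbF.
by rewrite cards0 subn0.
Qed.

Lemma inEP e : reflect (exists i j, e = edge i j) (e \in E).
Proof.
rewrite EE /complete_bip inE; apply: (iffP idP).
  have := valP e; rewrite /Kpred => /cards2P [x [y [xy ev]]].
  rewrite ev card2I //.
  case hx: (x \in H); case hy: (y \in H) => //= _.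
    have [i ex] := hv_surj hx; have [j ey] : exists j, y = tv j by apply: tv_surj; rewrite hy.
    by exists i, j; apply: val_inj; rewrite /= ev ex ey.
  have [i ey] := hv_surj hy; have [j ex] : exists j, x = tv j by apply: tv_surj; rewrite hx.
  by exists i, j; apply: val_inj; rewrite /= ev ex ey setUC.
by case=> i [j ->] /=; rewrite card2I ?hv_tv // hvH (negbTE (tvT j)).
Qed.
Lemma edge_in_E i j : edge i j \in E.
Proof. by apply/inEP; exists i, j. Qed.

Definition P (r : 'I_6) : {set Kt V} := [set edge i (sig r i) | i : 'I_3].
Lemma inP r i j : (edge i j \in P r) = (sig r i == j).
Proof.
apply/imsetP/eqP => [[i' _ /edge_inj [-> ->]] // | <-].
by exists i.
Qed.
Lemma PsubE r e : e \in P r -> e \in E.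
Proof. by case/imsetP => i _ ->; exact: edge_in_E. Qed.

Lemma P_vertex r x : #|[set e in P r | x \in val e]| == 1.
Proof.
apply/cards1P.
case hx: (x \in H).
  have [i0 ->] := hv_surj hx; exists (edge i0 (sig r i0)).
  apply/setP => e; rewrite !inE; apply/andP/eqP => [[/imsetP [i _ ->]] | ->].
    by rewrite hv_in_edge => /eqP ->.
  by split; [apply/imsetP; exists i0 | rewrite hv_in_edge].
have [j0 ->] : exists j, x = tv j by apply: tv_surj; rewrite hx.
have [i0 Hi0] := sig_uniq r j0.
exists (edge i0 (sig r i0)).
apply/setP => e; rewrite !inE; apply/andP/eqP => [[/imsetP [i _ ->]] | ->].
  by rewrite tv_in_edge eq_sym Hi0 => /eqP ->.
by split; [apply/imsetP; exists i0 | rewrite tv_in_edge eq_sym Hi0].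
Qed.

Lemma cross (c : Ct V) X i j : val c = [set X; ~: X] ->
  in_Bc c (edge i j) = ((hv i \in X) != (tv j \in X)).
Proof.
move=> hc.
have -> : in_Bc c (edge i j) = (#|val (edge i j) :&: X| == 1) && (#|val (edge i j) :&: ~: X| == 1).
  apply/forall_inP/andP => [H1 | [H1 H2] Y].
    by split; apply: H1; rewrite hc !inE eqxx ?orbT.
  by rewrite hc in_set2 => /orP [/eqP -> | /eqP ->].
rewrite /= !card2I ?hv_tv // !in_setC.
by case: (hv i \in X); case: (tv j \in X).
Qed.

Lemma enum3 : enum 'I_3 = o3.
Proof. by apply: (inj_map val_inj); rewrite val_enum_ord. Qed.
Lemma card3 (Q : pred 'I_3) : #|[set i | Q i]| = Q i0 + Q i1 + Q i2.
Proof.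
rewrite -sum1_card big_mkcond /= -big_enum enum3 !big_cons big_nil !inE.
by case: (Q i0); case: (Q i1); case: (Q i2).
Qed.

Lemma pm_P (c : Ct V) X r : val c = [set X; ~: X] ->
  is_pm c (P r) = crb (fun i => hv i \in X) (fun j => tv j \in X) r.
Proof.
move=> hc; rewrite /is_pm.
have -> : [forall x, #|[set e in P r | x \in val e]| == 1] by apply/forallP => x; exact: P_vertex.
rewrite andbT /crb.
apply/forall_inP/allP => [Hf i _ | Ha e /imsetP [i _ ->]].
  by rewrite -(cross i (sig r i) hc); apply: Hf; apply/imsetP; exists i.
by rewrite (cross _ _ hc); apply: Ha; exact: mem_o3.
Qed.

Lemma classify_c (c : Ct V) :
  (forall r, is_pm c (P r)) \/ exists i j, forall r, is_pm c (P r) = (sig r i == j).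
Proof.
have /existsP [X /andP [/eqP hX /eqP hc]] := valP c.
have cX : #|X| = 3 by apply/eqP; rewrite -(eqn_pmul2r (isT : 0 < 2)) hX cV.
have h1 : X :&: H = hv @: [set i | hv i \in X].
  apply/setP => x; rewrite !inE; apply/andP/imsetP => [[xX xH] | [i]].
    by have [i ei] := hv_surj xH; exists i; rewrite ?inE -?ei.
  by rewrite inE => hi ->; split => //; exact: hvH.
have h2 : X :\: H = tv @: [set j | tv j \in X].
  apply/setP => x; rewrite !inE; apply/andP/imsetP => [[xH xX] | [j]].
    by have [j ej] := tv_surj xH; exists j; rewrite ?inE -?ej.
  by rewrite inE => hj ->; split => //; exact: tvT.
have hcount : (hv i0 \in X) + (hv i1 \in X) + (hv i2 \in X) + (tv i0 \in X) + (tv i1 \in X) + (tv i2 \in X) = 3.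
  rewrite -cX -(cardsID H X) h1 h2 !card_imset; [|exact: tv_inj|exact: hv_inj].
  by rewrite !card3 !addnA.
case: (@classify (fun i => hv i \in X) (fun j => tv j \in X) hcount) => [Hall | [i [j Hij]]].
  by left => r; rewrite (pm_P _ hc); exact: Hall.
by right; exists i, j => r; rewrite (pm_P _ hc); exact: Hij.
Qed.

Definition ctype (c : Ct V) : option ('I_3 * 'I_3) :=
  if [forall r : 'I_6, is_pm c (P r)] then None
  else [pick d : 'I_3 * 'I_3 | [forall r : 'I_6, is_pm c (P r) == (sig r d.1 == d.2)]].

Lemma ctypeP c r : is_pm c (P r) = compat (ctype c) r.
Proof.
rewrite /ctype; case: ifP => [/forallP -> // | hn].
case: pickP => [[i j] /forallP /(_ r) /eqP -> // | hnone].
exfalso; case: (classify_c c) => [Hall | [i [j Hij]]].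
  by move/negbT: hn; rewrite negb_forall => /existsP [r' ]; rewrite Hall.
have := hnone (i, j); rewrite /=.
by move/negbT; rewrite negb_forall => /existsP [r']; rewrite Hij eqxx.
Qed.

Lemma deg x : #|[set e in E | x \in val e]| = 3.
Proof.
case hx: (x \in H).
  have [i0 ->] := hv_surj hx.
  have -> : [set e in E | hv i0 \in val e] = (fun j => edge i0 j) @: [set: 'I_3].
    apply/setP => e; rewrite !inE; apply/andP/imsetP => [[/inEP [i [j ->]]] | [j _ ->]].
      by rewrite hv_in_edge => /eqP ->; exists j.
    by rewrite edge_in_E hv_in_edge.
  by rewrite card_imset ?cardsT ?card_ord // => j j' /edge_inj [].
have [j0 ->] : exists j, x = tv j by apply: tv_surj; rewrite hx.
have -> : [set e in E | tv j0 \in val e] = (fun i => edge i j0) @: [set: 'I_3].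
  apply/setP => e; rewrite !inE; apply/andP/imsetP => [[/inEP [i [j ->]]] | [i _ ->]].
    by rewrite tv_in_edge => /eqP ->; exists i.
  by rewrite edge_in_E tv_in_edge.
by rewrite card_imset ?cardsT ?card_ord // => i i' /edge_inj [].
Qed.

Lemma regE : regular E.
Proof. by exists 3 => x; exact: deg. Qed.

Lemma pm_shape (c : Ct V) (q : {set Kt V}) : is_pm c q -> {subset q <= E} -> exists r, q = P r.
Proof.
case/andP => _ /forallP Hv qE.
have ex1 : forall i, exists j, edge i j \in q.
  move=> i; have /cards1P [e0 he0] := Hv (hv i).
  have : e0 \in [set e in q | hv i \in val e] by rewrite he0 set11.
  rewrite inE => /andP [e0q hh].
  have /inEP [i' [j ee]] := qE _ e0q.
  by exists j; move: hh e0q; rewrite ee hv_in_edge => /eqP ->.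
have uniq1 : forall i j j', edge i j \in q -> edge i j' \in q -> j = j'.
  move=> i j j' h h'; have /cards1P [e0 he0] := Hv (hv i).
  have : edge i j \in [set e in q | hv i \in val e] by rewrite inE h hv_in_edge eqxx.
  have : edge i j' \in [set e in q | hv i \in val e] by rewrite inE h' hv_in_edge eqxx.
  by rewrite he0 !inE => /eqP e1 /eqP e2; have [] := edge_inj (etrans e2 (esym e1)).
pose f i := odflt i0 [pick j | edge i j \in q].
have hf : forall i, edge i (f i) \in q.
  move=> i; rewrite /f; case: pickP => [j // | hn].
  by have [j hj] := ex1 i; have := hn j; rewrite hj.
have finj : injective f.
  move=> i i' e; have /cards1P [e0 he0] := Hv (tv (f i)).
  have : edge i (f i) \in [set e in q | tv (f i) \in val e] by rewrite inE hf tv_in_edge eqxx.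
  have : edge i' (f i') \in [set e in q | tv (f i) \in val e] by rewrite inE hf tv_in_edge e eqxx.
  by rewrite he0 !inE => /eqP e1 /eqP e2; have [] := edge_inj (etrans e2 (esym e1)).
have [r hr] := sig_of_inj finj.
exists r; apply/setP => e; apply/idP/idP => [he | /imsetP [i _ ->]]; last by rewrite hr.
have /inEP [i [j ee]] := qE _ he.
have he' := he; rewrite ee in he'.
by rewrite ee inP hr -(uniq1 i _ _ (hf i) he').
Qed.

Lemma sum_eq1 (x : 'I_3) : \sum_(j : 'I_3) (x == j) = 1.
Proof.
rewrite (bigD1 x) //= eqxx big1 // => j hj.
by rewrite eq_sym (negbTE hj).
Qed.

Lemma bfact : B_factorizable E.
Proof.
move=> v [k [kpos [s [Hall Hs]]]] HvK.
have Hs' : forall z, k * v z = \sum_(p <- s) chiEc p.1 p.2 z by move=> z; rewrite -Hs ffunE.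
have chiK : forall q c e, chiEc q c (inl e) = (e \in q) by move=> *; rewrite ffunE.
have chiC : forall q c c', chiEc q c (inr c') = (c' == c) by move=> *; rewrite ffunE.
have pmS : forall p, p \in s -> is_pm p.2 p.1 by move=> p ps; exact: (allP Hall p ps).
have subE : forall p, p \in s -> {subset p.1 <= E}.
  move=> p ps e ep; apply/negPn/negP => eE.
  have := Hs' (inl e); rewrite HvK (negbTE eE) muln0 (big_rem p ps) /= chiK ep add1n.
  by [].
pose rp (p : {set Kt V} * Ct V) := odflt (o 0) [pick r | P r == p.1].
have rpP : forall p, p \in s -> p.1 = P (rp p).
  move=> p ps; have [r hr] := pm_shape (pmS p ps) (subE p ps).
  rewrite /rp; case: pickP => [r' /eqP -> // | hn].
  by have := hn r; rewrite hr eqxx.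
have S3 : forall p, p \in s -> compat (ctype p.2) (rp p).
  by move=> p ps; rewrite -ctypeP -rpP //; exact: pmS.
have E1 : forall i j, \sum_(p <- s) (sig (rp p) i == j) = k.
  move=> i j; have := Hs' (inl (edge i j)); rewrite HvK edge_in_E muln1 => ->.
  by apply: eq_big_seq => p ps; rewrite chiK (rpP p ps) inP.
have E2 : forall c, \sum_(p <- s) (p.2 == c) = k * v (inr c).
  by move=> c; rewrite Hs'; apply: eq_bigr => p _; rewrite chiC eq_sym.
have S6 : size s = 3 * k.
  rewrite -(card_ord 3) -sum_nat_const.
  rewrite (eq_bigr (fun j => \sum_(p <- s) (sig (rp p) i0 == j))); last by move=> j _; rewrite E1.
  rewrite exchange_big /= -sum1_size.
  by apply: eq_bigr => p _; rewrite sum_eq1.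
have [L HL] := exists_L (fun c : Ct V => v (inr c)).
have G : forall F : Ct V -> nat, \sum_(p <- s) F p.2 = k * \sum_(x <- L) F x.
  move=> F; rewrite -sum_count big_distrr /=.
  rewrite (eq_bigr (fun p => \sum_(c : Ct V) (p.2 == c) * F c)); last first.
    move=> p _; rewrite (bigD1 p.2) //= eqxx mul1n big1 ?addn0 // => c hc.
    by rewrite eq_sym (negbTE hc).
  rewrite exchange_big /=; apply: eq_bigr => c _.
  by rewrite -big_distrl /= E2 HL mulnA.
have sL : size L = 3.
  have := G (fun _ => 1); rewrite !sum1_size S6 mulnC => /eqP.
  by rewrite eqn_pmul2l // => /eqP.
have inL : forall p, p \in s -> p.2 \in L.
  move=> p ps; apply/negPn/negP => hn.
  have h0 : \sum_(x <- L) (x \notin L) = 0 by rewrite big1_seq // => x /andP [_ ->].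
  have := G (fun x => x \notin L); rewrite h0.
  by rewrite muln0 (big_rem p ps) /= hn add1n.
have GN : \sum_(p <- s) (ctype p.2 == None) = k * \sum_(x <- L) (ctype x == None) := G _.
have leS : forall p, p \in s -> forall F : Ct V -> nat, F p.2 <= \sum_(q <- s) F q.2.
  by move=> p ps F; rewrite (big_rem p ps) leq_addr.
clear G; move: HL sL inL GN; case: L => [|c1 [|c2 [|c3 [|]]]] // HL _ inL GN.
have TW : forall p, p \in s -> unhit (ctype c1) (ctype c2) (ctype c3) (rp p) -> ctype p.2 = None.
  move=> p ps /and3P [u1 u2 u3]; have := S3 p ps.
  have := inL p ps; rewrite !inE => /or3P [] /eqP ->.
  - by move: u1; case: (ctype c1) => [d|] //= /negbTE ->.
  - by move: u2; case: (ctype c2) => [d|] //= /negbTE ->.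
  - by move: u3; case: (ctype c3) => [d|] //= /negbTE ->.
have isNE : forall c, (ctype c == None) = isN (ctype c) :> nat by move=> c; case: (ctype c).
rewrite !big_cons big_nil addn0 !isNE !addnA in GN.
case/orP: (certP (ctype c1) (ctype c2) (ctype c3)) => [/hasP [[[r1 r2] r3] _ /= /and4P [h1 h2 h3 hpart]] | hc].
  exists [:: (P r1, c1); (P r2, c2); (P r3, c3)]; split.
    by rewrite /= !ctypeP h1 h2 h3.
  case=> [e | c].
    rewrite HvK !big_cons big_nil /= !chiK addn0.
    case eE: (e \in E).
      have /inEP [i [j ->]] := eE; rewrite !inP.
      have := hpart => /allP /(_ i (mem_o3 i)) /allP /(_ j (mem_o3 j)) /eqP.
      by rewrite addnA => ->.
    have nP : forall r, (e \in P r) = false.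
      by move=> r; apply/negP => /PsubE; rewrite eE.
    by rewrite !nP.
  transitivity (count_mem c [:: c1; c2; c3]); first by rewrite HL.
  by rewrite !big_cons big_nil !chiC /= (eq_sym c1) (eq_sym c2) (eq_sym c3).
exfalso; move: hc.
case: ifP => [h0 /hasP [r rE /hasP [r' rO /andP [u u']]] | hn1].
  have [i [j Hx]] := pairA rE rO.
  have : k <= \sum_(p <- s) (ctype p.2 == None).
    rewrite -(E1 i j) big_seq_cond [X in _ <= X]big_seq_cond; apply: leq_sum => p /andP [ps _].
    case h: (sig (rp p) i == j) => //.
    by case/orP: (Hx _ h) => /eqP e; rewrite TW // e.
  by rewrite GN (eqP h0) muln0 leqn0 => /eqP k0; rewrite k0 in kpos.
case: ifP => [h1 /hasP [pp ppE /hasP [pp' ppO /and4P [u1 u2 u3 u4]]] | //].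
have [i [j [i' [j' Hx]]]] := pairB ppE ppO.
have : k + k <= \sum_(p <- s) (ctype p.2 == None).
  rewrite -{1}(E1 i j) -(E1 i' j') -big_split /=.
  rewrite big_seq_cond [X in _ <= X]big_seq_cond; apply: leq_sum => p /andP [ps _].
  have /and3P [/implyP ha /implyP hb hab] := Hx (rp p).
  case h: (sig (rp p) i == j); case h': (sig (rp p) i' == j') => //=.
  - by rewrite h h' in hab.
  - by case/orP: (ha h) => /eqP e; rewrite TW // e.
  - by case/orP: (hb h') => /eqP e; rewrite TW // e.
rewrite GN (eqP h1) muln1 -{3}(addn0 k) leq_add2l leqn0 => /eqP k0.
by rewrite k0 in kpos.
Qed.
End Graph.

Theorem mainTheorem11 (V : finType) (H : {set V}) :
  #|V| = 6 -> #|H| = 3 ->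
  regular (complete_bip H) /\ B_factorizable (complete_bip H).
Proof.
move=> cV cH; rewrite -(EE H); split; [exact: regE cH | exact: bfact cV cH].
Qed.
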